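(* Let $1<p<\infty$, $1/p-1<\gamma<1/p$, and $\{\lambda_n\}_{n=1}^\infty\in\mathrm{GBV}$. Then there is a constant $C$ depending only on $M(\lambda)$, $p$ and $\gamma$ such that $$\sum_{n=1}^\infty n^{p+p\gamma-2}\Big(\sum_{k=n}^\infty|\lambda_k-\lambda_{k+1}|\Big)^p\le C\sum_{n=1}^\infty n^{p+p\gamma-2}\lambda_n^p .$$
   Context: $\Delta c_n:=c_n-c_{n+1}$. A sequence $\mathbf c=\{c_n\}_{n=1}^\infty$ belongs to the class $\mathrm{GBV}$ if $c_n\ge 0$ for all $n$, $c_n\to 0$ as $n\to\infty$, and there is a positive constant $M(\mathbf c)$ depending only on $\mathbf c$ such that $\sum_{n=m}^{2m}|\Delta c_n|\le M(\mathbf c)\,c_m$ for all $m=1,2,\dots$. *)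

(* Defs.v *)
From mathcomp Require Import all_boot all_order all_algebra.
From mathcomp Require Import all_classical all_reals all_analysis.
Set Implicit Arguments. Unset Strict Implicit. Unset Printing Implicit Defensive.
Import Order.TTheory GRing.Theory Num.Theory.
Import numFieldNormedType.Exports.
Local Open Scope classical_set_scope.
Local Open Scope ring_scope.

(* Sequences are indexed by nat; the value at index 0 is irrelevant
   (the paper's sequences start at n = 1). *)

Definition GBV_with {R : realType} (c : nat -> R) (M : R) : Prop :=
  [/\ (forall n, (0 < n)%N -> 0 <= c n),
      c @ \oo --> (0 : R) &
      (forall m, (0 < m)%N ->
         \sum_(m <= n < (2 * m).+1) `|c n - c n.+1| <= M * c m)].

Definition GBV {R : realType} (c : nat -> R) : Prop :=
  exists M : R, 0 < M /\ GBV_with c M.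

(* Main.v *)
Require Import Defs.
From mathcomp Require Import all_boot all_order all_algebra.
From mathcomp Require Import all_classical all_reals all_analysis.
From mathcomp Require Import lra ring zify.
Import Order.TTheory GRing.Theory Num.Theory.
Import numFieldNormedType.Exports.
Local Open Scope ring_scope.

Section Aux.
Variable R : realType.




Lemma bern (x y c : R) : 0 <= x -> x <= y -> 0 < y -> 0 < c ->
  x `^ c * (1 + c * ((y - x) / y)) <= y `^ c.
Proof.
move=> x0 xy y0 c0.
have [->|xn0] := eqVneq x 0; first by rewrite powR0 ?gt_eqF// mul0r powR_ge0.
have xp : 0 < x by rewrite lt_neqAle eq_sym xn0.
set t := (y - x) / y.
have t0 : 0 <= t by rewrite divr_ge0 ?subr_ge0// ltW.
have t1 : t < 1 by rewrite /t ltr_pdivrMr// mul1r ltrBlDr ltrDl.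
have xE : x = y * (1 + - t).
  by rewrite /t mulrDr mulr1 mulrN mulrCA divff ?gt_eqF// mulr1 opprB addrC subrK.
rewrite /powR (gt_eqF xp) (gt_eqF y0).
have hl : ln x <= ln y - t.
  have t1' : 0 < 1 + - t by rewrite subr_gt0.
  rewrite xE lnM ?posrE// lerD2l.
  by rewrite le_ln1Dx// ltrN2.
have h1 : expR (c * ln x) <= expR (c * ln y) * expR (- (c * t)).
  by rewrite -expRD ler_expR -mulrN -mulrDr ler_pM2l.
have ct0 : 0 <= c * t by rewrite mulr_ge0// ltW.
apply: (le_trans (ler_wpM2r _ h1)); first by rewrite addr_ge0.
rewrite -mulrA ler_piMr ?expR_ge0// expRN ler_pdivrMl ?expR_gt0// mulr1.
exact: expR_ge1Dx.
Qed.





Lemma pow_sum (b : R) N : 0 < b ->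
  \sum_(1 <= n < N.+1) n%:R `^ (b - 1) <= (1 + b^-1) * N%:R `^ b.
Proof.
move=> b0; elim: N => [|N IH].
  by rewrite big_geq// powR0 ?gt_eqF// mulr0.
rewrite big_nat_recr//=.
set y : R := N.+1%:R.
have y1 : 1 <= y by rewrite /y ler1n.
have y0 : 0 < y by lra.
have Ny : N%:R <= y by rewrite /y ler_nat.
have h := @bern N%:R y b (ler0n _ _) Ny y0 b0.
have E1 : y - N%:R = 1 by rewrite /y -natr1 addrAC subrr add0r.
rewrite E1 in h.
set A := N%:R `^ b in IH h *; set B := y `^ b in h *.
have -> : y `^ (b - 1) = B / y.
  rewrite powRB; first by rewrite powRr1 // ltW.
  by rewrite (gt_eqF y0) implybT.
have A0 : 0 <= A by apply: powR_ge0.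
have B0 : 0 <= B by apply: powR_ge0.
suff hs : B / y <= (1 + b^-1) * (B - A).
  have -> : (1 + b^-1) * B = (1 + b^-1) * A + (1 + b^-1) * (B - A) by ring.
  exact: lerD.
have h' : A * (y + b) <= B * y.
  have -> : A * (y + b) = A * (1 + b * (1 / y)) * y by field; rewrite gt_eqF.
  by rewrite ler_wpM2r// ltW.
rewrite ler_pdivrMr// -subr_ge0.
have -> : (1 + b^-1) * (B - A) * y - B = (y * (b + 1) * (B * y - A * (y + b)) + B * (b * b) * (y - 1)) / (b * (y + b)).
  by field; rewrite ?gt_eqF//; lra.
apply: divr_ge0; last by rewrite mulr_ge0//; lra.
apply: addr_ge0; apply: mulr_ge0; rewrite ?mulr_ge0//; lra.
Qed.

Lemma tail_sum (r : R) (N0 K : nat) : 0 < r -> (0 < N0)%N ->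
  \sum_(N0 <= m < K) (m%:R `^ r * m%:R)^-1 <= (1 + r^-1) * (N0%:R `^ r)^-1.
Proof.
move=> r0 N00.
set T := fun m : nat => (m%:R `^ r * m%:R : R)^-1.
set g := fun m : nat => (m%:R `^ r : R)^-1.
have T0 m : 0 <= T m by rewrite /T invr_ge0 mulr_ge0 ?powR_ge0.
have g0 m : 0 <= g m by rewrite /g invr_ge0 powR_ge0.
have step m : (0 < m)%N -> T m.+1 <= r^-1 * (g m - g m.+1).
  move=> m0; rewrite /T /g.
  have mp : 0 < m%:R :> R by rewrite ltr0n.
  have yp : 0 < m.+1%:R :> R by rewrite ltr0n.
  have my : m%:R <= m.+1%:R :> R by rewrite ler_nat.
  have h := @bern m%:R m.+1%:R r (ltW mp) my yp r0.
  have E1 : m.+1%:R - m%:R = 1 :> R by rewrite -natr1 addrAC subrr add0r.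
  rewrite E1 in h.
  set a := m%:R `^ r in h *; set b := m.+1%:R `^ r in h *; set y := m.+1%:R in h yp *.
  have a0 : 0 < a by apply: powR_gt0.
  have b0 : 0 < b by apply: powR_gt0.
  rewrite -subr_ge0.
  have -> : r^-1 * (a^-1 - b^-1) - (b * y)^-1 = (b * y - a * y - r * a) / (r * a * b * y).
    by field; rewrite ?gt_eqF//; lra.
  apply: divr_ge0; last by rewrite !mulr_ge0// ltW.
  have : a * (y + r) <= b * y.
    have -> : a * (y + r) = a * (1 + r * (1 / y)) * y by field; rewrite gt_eqF.
    by rewrite ler_wpM2r// ltW.
  lra.
have s1 : \sum_(N0 <= m < K) T m <= T N0 + \sum_(N0 <= m < K) T m.+1.
  case: (leqP K N0) => KN.
    by rewrite big_geq// addr_ge0// sumr_ge0.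
  case: K KN => // K KN.
  rewrite big_nat_recl// lerD2l big_nat_recr//= lerDl.
  exact: T0.
have s2 : \sum_(N0 <= m < K) T m.+1 <= r^-1 * g N0.
  case: (leqP K N0) => KN; first by rewrite big_geq// mulr_ge0// invr_ge0 ltW.
  apply: (@le_trans _ _ (\sum_(N0 <= m < K) r^-1 * (g m - g m.+1))).
    apply: ler_sum_nat => m /andP[Hm _]; apply: step; exact: leq_trans N00 Hm.
  rewrite -mulr_sumr ler_wpM2l ?invr_ge0 ?(ltW r0)//.
  have -> : \sum_(N0 <= i < K) (g i - g i.+1) = g N0 - g K.
    rewrite -[RHS]opprB -telescope_sumr; last exact: ltnW.
    by rewrite -sumrN; apply: eq_bigr => i _; rewrite opprB.
  by rewrite gerBl.
apply: (le_trans s1); apply: (le_trans (lerD (lexx _) s2)).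
rewrite mulrDl mul1r lerD2r /T /g lef_pV2 ?posrE ?mulr_gt0 ?powR_gt0 ?ltr0n//.
by rewrite ler_peMr ?powR_ge0// ler1n.
Qed.


Lemma hoelder_seq (p q : R) (s : seq nat) (a b : nat -> R) :
  (forall i, 0 <= a i) -> (forall i, 0 <= b i) -> 0 < p -> 0 < q ->
  p^-1 + q^-1 = 1 ->
  \sum_(i <- s) a i * b i <=
    (\sum_(i <- s) a i `^ p) `^ p^-1 * (\sum_(i <- s) b i `^ q) `^ q^-1.
Proof.
move=> a0 b0 p0 q0 pq; elim: s => [|i s IH].
  by rewrite !big_nil mulr_ge0 ?powR_ge0.
rewrite !big_cons.
set A := \sum_(j <- s) a j `^ p in IH *.
set B := \sum_(j <- s) b j `^ q in IH *.
have A0 : 0 <= A by rewrite sumr_ge0// => j _; rewrite powR_ge0.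
have B0 : 0 <= B by rewrite sumr_ge0// => j _; rewrite powR_ge0.
apply: (le_trans (lerD (lexx _) IH)).
have := @hoelder2 R (a i) (A `^ p^-1) (b i) (B `^ q^-1) p q (a0 i) (powR_ge0 _ _)
  (b0 i) (powR_ge0 _ _) p0 q0 pq.
rewrite -!powRrM !mulVf ?gt_eqF// !powRr1//.
Qed.

Lemma jensen_seq (p : R) (s : seq nat) (w x : nat -> R) :
  1 < p -> (forall i, 0 <= w i) -> (forall i, 0 <= x i) ->
  (\sum_(i <- s) w i * x i) `^ p <=
    (\sum_(i <- s) w i) `^ (p - 1) * \sum_(i <- s) w i * x i `^ p.
Proof.
move=> p1 w0 x0.
have p0 : 0 < p by lra.
have pi1 : p^-1 < 1 by rewrite invf_lt1.
have pi0 : 0 < p^-1 by rewrite invr_gt0.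
set q := (1 - p^-1)^-1.
have q0 : 0 < q by rewrite invr_gt0 subr_gt0.
have pq : p^-1 + q^-1 = 1 by rewrite invrK addrC subrK.
have := @hoelder_seq p q s (fun i => w i `^ p^-1 * x i) (fun i => w i `^ q^-1)
  (fun i => mulr_ge0 (powR_ge0 _ _) (x0 i)) (fun i => powR_ge0 _ _) p0 q0 pq.
have e1 i : w i `^ p^-1 * x i * w i `^ q^-1 = w i * x i.
  by rewrite mulrAC -powRD ?pq ?powRr1// ?pq ?oner_eq0.
have e2 i : (w i `^ p^-1 * x i) `^ p = w i * x i `^ p.
  by rewrite powRM ?powR_ge0// -powRrM mulVf ?gt_eqF// powRr1.
have e3 i : (w i `^ q^-1) `^ q = w i.
  by rewrite -powRrM mulVf ?gt_eqF// powRr1.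
under eq_bigr do rewrite e1.
under [X in _ <= X `^ _ * _]eq_bigr do rewrite e2.
under [X in _ <= _ * X `^ _]eq_bigr do rewrite e3.
move=> h.
have S0 : 0 <= \sum_(i <- s) w i * x i by rewrite sumr_ge0// => i _; rewrite mulr_ge0.
have W0 : 0 <= \sum_(i <- s) w i by rewrite sumr_ge0.
have V0 : 0 <= \sum_(i <- s) w i * x i `^ p by rewrite sumr_ge0// => i _; rewrite mulr_ge0 ?powR_ge0.
have := @ge0_ler_powR R p (ltW p0) _ _ S0 (mulr_ge0 (powR_ge0 _ _) (powR_ge0 _ _)) h.
rewrite powRM ?powR_ge0// -!powRrM mulVf ?gt_eqF// powRr1// mulrC.
have -> : q^-1 * p = p - 1 by rewrite invrK mulrBl mul1r mulVf ?gt_eqF.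
done.
Qed.


Lemma sum_sub (f : nat -> R) a b c d (P Q : pred nat) :
  (forall k, 0 <= f k) ->
  (forall k, (a <= k < b)%N -> P k -> (c <= k < d)%N && Q k) ->
  \sum_(a <= k < b | P k) f k <= \sum_(c <= k < d | Q k) f k.
Proof.
move=> f0 h.
rewrite (@big_nat_widenl _ _ _ a 0 b) // (@big_nat_widen _ _ _ 0 b (b + d)) ?leq_addr //.
rewrite (@big_nat_widenl _ _ _ c 0 d) // (@big_nat_widen _ _ _ 0 d (b + d)) ?leq_addl //.
rewrite big_mkcond [X in _ <= X]big_mkcond /=.
apply: ler_sum => k _.
case E: (_ && _) => //; last by case: ifP.
move: E => /andP[/andP[Pk ak] kb].
have /andP[/andP[ck kd] Qk] := h k (introT andP (conj ak kb)) Pk.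
by rewrite Qk ck kd.
Qed.

Lemma step1 (lam : nat -> R) (M : R) (n K : nat) :
  0 <= M ->
  (forall m, (0 < m)%N -> 0 <= lam m) ->
  (forall m, (0 < m)%N ->
     \sum_(m <= k < (2 * m).+1) `|lam k - lam k.+1| <= M * lam m) ->
  (0 < n)%N ->
  \sum_(n <= k < K) `|lam k - lam k.+1| <=
    2 * M * \sum_(1 <= m < K) (if (n <= 2 * m)%N then lam m / m%:R else 0).
Proof.
move=> M0 l0 hM n0.
set d := fun k => `|lam k - lam k.+1|.
have d0 k : 0 <= d k by exact: normr_ge0.
set S := fun k => \sum_(1 <= m < K) (if (m <= k <= 2 * m)%N then (m%:R : R)^-1 else 0).
have Sk k : (0 < k)%N -> (k < K)%N -> 1 <= 2 * S k.
  move=> k0 kK.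
  have e : S k = \sum_(1 <= m < K | (m <= k <= 2 * m)%N) (m%:R : R)^-1.
    by rewrite /S [RHS]big_mkcond.
  rewrite e.
  have h1 : \sum_(uphalf k <= m < k.+1 | true) (m%:R : R)^-1 <=
            \sum_(1 <= m < K | (m <= k <= 2 * m)%N) (m%:R : R)^-1.
    apply: sum_sub => [m|m]; first by rewrite invr_ge0.
    move=> /andP[hm1 hm2] _.
    move: hm1 hm2; rewrite uphalf_half; have := odd_double_half k.
    move=> hk hm1 hm2; apply/andP; split; first (apply/andP; split); first by lia.
      by lia.
    by apply/andP; split; lia.
  apply: (le_trans _ (ler_wpM2l _ h1)) => //.
  have h2 : \sum_(uphalf k <= m < k.+1) (k%:R : R)^-1 <=
            \sum_(uphalf k <= m < k.+1 | true) (m%:R : R)^-1.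
    apply: ler_sum_nat => m /andP[hm1 hm2].
    have m0 : (0 < m)%N.
      move: hm1; rewrite uphalf_half; have := odd_double_half k; lia.
    rewrite lef_pV2 ?posrE ?ltr0n// ler_nat; lia.
  apply: (le_trans _ (ler_wpM2l _ h2)) => //.
  rewrite sumr_const_nat mulrnAr -mulr_natr.
  have kp : 0 < k%:R :> R by rewrite ltr0n.
  rewrite mulrAC ler_pdivlMr// mul1r -natrM ler_nat mulnC.
  rewrite uphalf_half; have := odd_double_half k; lia.
have st1 : \sum_(n <= k < K) d k <= \sum_(n <= k < K) 2 * (d k * S k).
  apply: ler_sum_nat => k /andP[nk kK].
  rewrite mulrCA ler_peMr//; apply: Sk => //; lia.
apply: (le_trans st1).
rewrite -mulr_sumr -mulrA ler_wpM2l//.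
have e2 : \sum_(n <= k < K) d k * S k =
  \sum_(1 <= m < K) \sum_(n <= k < K) (if (m <= k <= 2 * m)%N then d k / m%:R else 0).
  rewrite exchange_big_nat; apply: eq_bigr => k _.
  rewrite /S mulr_sumr; apply: eq_bigr => m _.
  by case: ifP; rewrite ?mulr0.
rewrite e2 mulr_sumr; apply: ler_sum_nat => m /andP[m0 mK].
case: ifP => nm.
  rewrite -big_mkcond /= -mulr_suml mulrA ler_wpM2r ?invr_ge0//.
  apply: le_trans (hM m m0).
  apply: sum_sub => // k /andP[nk kK] /andP[mk km].
  by apply/andP; split => //; apply/andP; split => //; lia.
rewrite mulr0; rewrite big1_seq // => k /andP[_]; rewrite mem_index_iota => /andP[nk _].
case: ifP => // /andP[_ km]; exfalso; move/negbT: nm; lia.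
Qed.


End Aux.

Section Core.
Variable R : realType.

Lemma powRV (y c : R) : 0 < y -> (y^-1) `^ c = (y `^ c)^-1.
Proof.
move=> y0; rewrite -powR_inv1 ?(ltW y0)// -powRrM mulN1r powRN //.
Qed.

Lemma core (lam : nat -> R) (M p b : R) (n K : nat) :
  0 <= M -> 1 < p -> 0 < b ->
  (forall m, (0 < m)%N -> 0 <= lam m) ->
  (forall m, (0 < m)%N ->
     \sum_(m <= k < (2 * m).+1) `|lam k - lam k.+1| <= M * lam m) ->
  (0 < n)%N ->
  (\sum_(n <= k < K) `|lam k - lam k.+1|) `^ p <=
    ((2 * M) `^ p * ((1 + (b / (p - 1))^-1) * 2 `^ (b / (p - 1))) `^ (p - 1))
    * (n%:R `^ b)^-1 *
    \sum_(1 <= m < K) (if (n <= 2 * m)%N then lam m `^ p * m%:R `^ (b - 1) else 0).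
Proof.
move=> M0 p1 b0 l0 hM n0.
have p0 : 0 < p by lra.
have pm1 : 0 < p - 1 by lra.
set r := b / (p - 1).
have r0 : 0 < r by rewrite divr_gt0.
have rp : r * (p - 1) = b by rewrite /r mulfVK ?gt_eqF.
set C2 := (1 + r^-1) * 2 `^ r.
have C20 : 0 <= C2 by rewrite mulr_ge0 ?powR_ge0// addr_ge0// invr_ge0 ltW.
set w := fun m : nat => if (n <= 2 * m)%N then (m%:R `^ r * m%:R : R)^-1 else 0.
set x := fun m : nat => `|lam m| * m%:R `^ r.
have w0 m : 0 <= w m by rewrite /w; case: ifP => // _; rewrite invr_ge0 mulr_ge0 ?powR_ge0.
have x0 m : 0 <= x m by rewrite /x mulr_ge0 ?powR_ge0.
have S1E : \sum_(1 <= m < K) (if (n <= 2 * m)%N then lam m / m%:R else 0) =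
    \sum_(m <- index_iota 1 K) w m * x m.
  apply: eq_big_nat => m /andP[m0 _]; rewrite /w /x.
  case: ifP => _; last by rewrite mul0r.
  have mp : 0 < m%:R :> R by rewrite ltr0n.
  have hr : m%:R `^ r != 0 by rewrite gt_eqF// powR_gt0.
  have hm : m%:R != 0 :> R by rewrite gt_eqF.
  rewrite ger0_norm ?l0//; field; by rewrite ?hr ?hm.
have S2E : \sum_(m <- index_iota 1 K) w m * x m `^ p =
   \sum_(1 <= m < K) (if (n <= 2 * m)%N then lam m `^ p * m%:R `^ (b - 1) else 0).
  apply: eq_big_nat => m /andP[m0 _]; rewrite /w /x.
  case: ifP => _; last by rewrite mul0r.
  have mp : 0 < m%:R :> R by rewrite ltr0n.
  rewrite ger0_norm ?l0// powRM ?powR_ge0 ?l0// -powRrM mulrCA; congr (_ * _).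
  rewrite -{2}(powRr1 (ltW mp)) -powRD; last by rewrite (gt_eqF mp) implybT.
  rewrite -powRN -powRD; last by rewrite (gt_eqF mp) implybT.
  congr (_ `^ _); rewrite -rp; ring.
have Wb : \sum_(m <- index_iota 1 K) w m <= C2 * (n%:R `^ r)^-1.
  have e : \sum_(m <- index_iota 1 K) w m =
      \sum_(1 <= m < K | (n <= 2 * m)%N) (m%:R `^ r * m%:R : R)^-1.
    by rewrite [RHS]big_mkcond.
  rewrite e.
  apply: (le_trans (@sum_sub R (fun m => (m%:R `^ r * m%:R : R)^-1) 1 K (uphalf n) K
             (fun m => (n <= 2 * m)%N) (fun _ => true) _ _)).
  - by move=> m; rewrite invr_ge0 mulr_ge0 ?powR_ge0.
  - move=> m /andP[_ ->] h; rewrite andbT; move: h.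
    rewrite uphalf_half; have := odd_double_half n; lia.
  have N0 : (0 < uphalf n)%N by rewrite uphalf_half; have := odd_double_half n; lia.
  apply: (le_trans (@tail_sum R r (uphalf n) K r0 N0)).
  rewrite /C2 -mulrA ler_wpM2l ?addr_ge0 ?invr_ge0 ?(ltW r0)//.
  have np : 0 < n%:R :> R by rewrite ltr0n.
  have Np : 0 < (uphalf n)%:R :> R by rewrite ltr0n.
  rewrite ler_pdivlMr ?powR_gt0// mulrC ler_pdivrMr ?powR_gt0//.
  rewrite -powRM ?ler0n//; apply: ge0_ler_powR; rewrite ?nnegrE ?(ltW r0) ?ler0n ?mulr_ge0//.
  rewrite -natrM ler_nat uphalf_half; have := odd_double_half n; lia.
have P1 := @step1 R lam M n K M0 l0 hM n0.
set P := \sum_(n <= k < K) `|lam k - lam k.+1| in P1 *.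
have P0 : 0 <= P by rewrite sumr_ge0.
rewrite S1E in P1.
set S1 := \sum_(m <- index_iota 1 K) w m * x m in P1.
have S10 : 0 <= S1 by rewrite sumr_ge0// => m _; rewrite mulr_ge0.
have := @ge0_ler_powR R p (ltW p0) _ _ P0 (mulr_ge0 (mulr_ge0 (ler0n _ 2) M0) S10) P1.
move=> hP; apply: (le_trans hP).
have M2 : 0 <= 2 * M by rewrite mulr_ge0.
rewrite (powRM _ M2 S10) -!mulrA ler_wpM2l ?powR_ge0//.
apply: (le_trans (@jensen_seq R p _ w x p1 w0 x0)).
rewrite S2E mulrA ler_wpM2r//.
  by apply: sumr_ge0 => m _; case: ifP => // _; rewrite mulr_ge0 ?powR_ge0.
have W0 : 0 <= \sum_(m <- index_iota 1 K) w m by rewrite sumr_ge0.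
apply: (le_trans (ge0_ler_powR (ltW pm1) W0 _ Wb)); last first.
  by rewrite powRM ?invr_ge0 ?powR_ge0// powRV ?powR_gt0 ?ltr0n// -powRrM rp.
by rewrite nnegrE mulr_ge0// invr_ge0 powR_ge0.
Qed.


Lemma stepA (d : nat -> R) (g : nat -> R) (p Kc : R) (n : nat) :
  1 < p -> 0 <= Kc -> (forall k, 0 <= d k) -> (forall m, 0 <= g m) ->
  (forall K, (\sum_(n <= k < K) d k) `^ p <= Kc * \sum_(1 <= m < K) g m) ->
  (poweR (\sum_(n <= k <oo) (d k)%:E) p <=
    Kc%:E * \sum_(1 <= m <oo) (g m)%:E)%E.
Proof.
move=> p1 Kc0 d0 g0 hc.
have p0 : 0 < p by lra.
set G := (\sum_(1 <= m <oo) (g m)%:E)%E.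
have G0 : (0 <= G)%E by apply: nneseries_ge0 => m _ _; rewrite lee_fin.
set X := (Kc%:E * G)%E.
have X0 : (0 <= X)%E by rewrite mule_ge0.
set E := (\sum_(n <= k <oo) (d k)%:E)%E.
have E0 : (0 <= E)%E by apply: nneseries_ge0 => m _ _; rewrite lee_fin.
suff hE : (E <= poweR X p^-1)%E.
  have := @gt0_ler_poweR R p (ltW p0) E (poweR X p^-1).
  rewrite !in_itv /= !leey E0 poweR_ge0 => /(_ isT isT hE).
  by rewrite -poweRrM mulVf ?gt_eqF// poweRe1.
apply: lime_le.
  by apply: is_cvg_nneseries => k _ _; rewrite lee_fin.
apply: nearW => K.
rewrite sumEFin.
set PK := \sum_(n <= k < K) d k.
set GK := \sum_(1 <= m < K) g m.
have PK0 : 0 <= PK by rewrite sumr_ge0.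
have GK0 : 0 <= GK by rewrite sumr_ge0.
have h1 : PK <= (Kc * GK) `^ p^-1.
  rewrite -(powRr1 PK0) -(mulfV (lt0r_neq0 p0)) powRrM.
  by apply: ge0_ler_powR; rewrite ?nnegrE ?invr_ge0 ?powR_ge0 ?mulr_ge0 ?(ltW p0) ?hc.
apply: (le_trans (y := poweR (Kc * GK)%:E p^-1)).
  by rewrite poweR_EFin lee_fin.
have h2 : ((Kc * GK)%:E <= X)%E.
  rewrite EFinM lee_wpmul2l ?lee_fin// /GK -sumEFin.
  by apply: nneseries_lim_ge => m _ _; rewrite lee_fin.
have pi0 : 0 <= p^-1 by rewrite invr_ge0 ltW.
have := @gt0_ler_poweR R p^-1 pi0 ((Kc * GK)%:E) X.
rewrite !in_itv /= !leey X0 lee_fin mulr_ge0 //.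
by move=> /(_ isT isT h2).
Qed.
End Core.

Theorem mainTheorem6 (R : realType) (p gamma : R) :
  1 < p -> p^-1 - 1 < gamma -> gamma < p^-1 ->
  forall M : R, 0 < M ->
  exists C : R, 0 < C /\
    forall lambda : nat -> R, GBV_with lambda M ->
      (\sum_(1 <= n <oo)
          (((n%:R : R) `^ (p + p * gamma - 2))%:E *
           poweR (\sum_(n <= k <oo) (`|lambda k - lambda k.+1|)%:E) p)
       <= C%:E * \sum_(1 <= n <oo)
          (((n%:R : R) `^ (p + p * gamma - 2))%:E *
           ((lambda n) `^ p)%:E))%E.
Proof.
move=> p1 hg1 _ M M0.
have p0 : 0 < p by lra.
set al := p + p * gamma - 2.
set b := (al + 1) / 2.
have b0 : 0 < b.
  have : p * (p^-1 - 1) < p * gamma by rewrite ltr_pM2l.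
  rewrite mulrBr mulfV ?gt_eqF// mulr1 => h.
  rewrite /b divr_gt0// /al; lra.
have alb : al = b + b - 1 by rewrite /b; field; rewrite ?pnatr_eq0.
set r := b / (p - 1).
have r0 : 0 < r by rewrite divr_gt0//; lra.
set C2 := (1 + r^-1) * 2 `^ r.
have ri : 0 < 1 + r^-1.
  have : 0 < r^-1 by rewrite invr_gt0.
  lra.
have C20 : 0 < C2 by rewrite /C2 mulr_gt0 // powR_gt0.
set K1 := (2 * M) `^ p * C2 `^ (p - 1).
have K10 : 0 < K1 by rewrite /K1 mulr_gt0 // powR_gt0 // mulr_gt0.
set C := K1 * ((1 + b^-1) * 2 `^ b).
have bi : 0 < 1 + b^-1.
  have : 0 < b^-1 by rewrite invr_gt0.
  lra.
have C0 : 0 < C by rewrite /C mulr_gt0 // mulr_gt0 // powR_gt0.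
exists C; split => // lam [l0 _ hM].
set W := fun n : nat => (n%:R : R) `^ al.
set g := fun n m : nat =>
  if (n <= 2 * m)%N then lam m `^ p * m%:R `^ (b - 1) else 0.
have g0 n m : 0 <= g n m by rewrite /g; case: ifP => // _; rewrite mulr_ge0 ?powR_ge0.
set F := fun n m : nat => W n * (K1 * (n%:R `^ b)^-1) * g n m.
have F0 n m : 0 <= F n m.
  by rewrite /F !mulr_ge0 ?powR_ge0 ?invr_ge0 ?powR_ge0 ?(ltW K10).
have hB : (\sum_(1 <= n <oo)
          ((W n)%:E * poweR (\sum_(n <= k <oo) (`|lam k - lam k.+1|)%:E) p)
   <= \sum_(n <oo | (1 <= n)%N) \sum_(m <oo | (1 <= m)%N) (F n m)%:E)%E.
  rewrite ereal_series; apply: lee_nneseries => [n _ _|n n1].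
    by rewrite mule_ge0 ?poweR_ge0// lee_fin powR_ge0.
  have -> : (\sum_(m <oo | (1 <= m)%N) (F n m)%:E =
      (W n)%:E * ((K1 * (n%:R `^ b)^-1)%:E * \sum_(1 <= m <oo) (g n m)%:E))%E.
    rewrite -ereal_series muleA -EFinM -nneseriesZl; last by move=> m _; rewrite lee_fin.
    by apply: eq_eseriesr => m _; rewrite -EFinM.
  apply: lee_wpmul2l; first by rewrite lee_fin powR_ge0.
  apply: (@stepA R (fun k => `|lam k - lam k.+1|) (g n) p _ n p1).
  - by rewrite mulr_ge0 ?invr_ge0 ?powR_ge0 ?(ltW K10).
  - by move=> k; exact: normr_ge0.
  - by move=> m; exact: g0.
  - move=> K; exact: (@core R lam M p b n K (ltW M0) p1 b0 l0 hM n1).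
apply: (le_trans hB).
rewrite nneseries_interchange; last by move=> n m; rewrite lee_fin.
have hR : (C%:E * \sum_(1 <= n <oo) ((W n)%:E * ((lam n) `^ p)%:E) =
    \sum_(m <oo | (1 <= m)%N) (C * (W m * lam m `^ p))%:E)%E.
  rewrite -nneseriesZl; last by move=> n _; rewrite -EFinM lee_fin mulr_ge0 ?powR_ge0.
  by rewrite ereal_series; apply: eq_eseriesr => n _; rewrite !EFinM.
rewrite /W in hR; rewrite hR; clear hR hB.
apply: lee_nneseries => [m _ _|m m1].
  by apply: nneseries_ge0 => n _ _; rewrite lee_fin.
have mp : 0 < m%:R :> R by rewrite ltr0n.
set c := K1 * (lam m `^ p * m%:R `^ (b - 1)).
have c0 : 0 <= c by rewrite mulr_ge0 ?mulr_ge0 ?powR_ge0 ?(ltW K10).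
set h := fun n : nat => if (n <= 2 * m)%N then (n%:R : R) `^ (b - 1) else 0.
have e1 : (\sum_(n <oo | (1 <= n)%N) (F n m)%:E =
    c%:E * \sum_(1 <= n <oo) (h n)%:E)%E.
  rewrite -nneseriesZl; last first.
    by move=> n _; rewrite lee_fin /h; case: ifP => // _; rewrite powR_ge0.
  rewrite ereal_series; apply: eq_eseriesr => n n1; rewrite -EFinM; congr (_%:E).
  rewrite /F /g /h /c; case: ifP => _; last by rewrite !mulr0.
  have np : 0 < n%:R :> R by rewrite ltr0n.
  have e : n%:R `^ al * (n%:R `^ b)^-1 = n%:R `^ (b - 1).
    rewrite -powRB; last by rewrite (gt_eqF np) implybT.
    by congr (_ `^ _); rewrite alb; ring.
  rewrite /W -e; ring.
rewrite e1.
have e2 : (\sum_(1 <= n <oo) (h n)%:E = (\sum_(1 <= n < (2 * m).+1) (n%:R : R) `^ (b - 1))%:E)%E.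
  rewrite (nneseries_split 1 (2 * m)); last first.
    by move=> k _; rewrite lee_fin /h; case: ifP => // _; rewrite powR_ge0.
  rewrite [X in (_ + X)%E]eseries0 ?adde0; last first.
    by move=> k hk _; rewrite /h; case: ifP => //; lia.
  rewrite sumEFin add1n; congr (_%:E); apply: eq_big_nat => k /andP[_ hk].
  by rewrite /h ifT //; lia.
rewrite e2 -EFinM lee_fin.
apply: (le_trans (ler_wpM2l c0 (@pow_sum R b (2 * m) b0))).
rewrite /c /C natrM powRM ?ler0n// mulrC.
have -> : m%:R `^ al = m%:R `^ (b - 1) * m%:R `^ b.
  rewrite -powRD; last by rewrite (gt_eqF mp) implybT.
  by congr (_ `^ _); rewrite alb; ring.
rewrite le_eqVlt; apply/orP; left; apply/eqP; ring.
Qed.
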